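(* Let $x$ be an ascent sequence that is a restricted growth function (RGF). Then: (i) $x$ contains $0101$ if and only if $x$ contains $101$; (ii) $x$ contains $0102$ if and only if $x$ contains $102$; (iii) $x$ contains $0120$ if and only if $x$ contains $120$; (iv) $x$ contains $0121$ if and only if $x$ contains $021$.
   Context: An ascent in an integer sequence $s_1\cdots s_m$ is an index $j$ with $s_j<s_{j+1}$; $\mathrm{asc}$ denotes the number of ascents. An ascent sequence is a sequence $x_1\cdots x_n$ of nonnegative integers with $x_1=0$ and $x_i\le 1+\mathrm{asc}(x_1\cdots x_{i-1})$ for all $i\ge2$. The reduction $\mathrm{red}(w)$ of an integer sequence $w$ replaces the $i$-th smallest distinct letter of $w$ by $i-1$; a pattern is a reduced sequence. A sequence $x$ contains a pattern $p=p_1\cdots p_k$ if there are indices $i_1<\cdots<i_k$ with $\mathrm{red}(x_{i_1}\cdots x_{i_k})=p$; otherwise $x$ avoids $p$. A sequence $x_1\cdots x_n$ of nonnegative integers is a restricted growth function (RGF) if for each $k\ge1$, the first occurrence of $k$ in $x$ (if any) is preceded by an occurrence of $k-1$. *)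

(* Defs.v *)
From mathcomp Require Import all_boot.
Set Implicit Arguments. Unset Strict Implicit. Unset Printing Implicit Defensive.

(* Integer sequences are modelled as [seq nat] (all sequences involved are of
   nonnegative integers). *)

Definition asc (s : seq nat) : nat :=
  count (fun p : nat * nat => p.1 < p.2) (zip s (behead s)).

Definition is_ascent_seq (x : seq nat) : Prop :=
  (size x > 0 -> nth 0 x 0 = 0) /\
  (forall i, 1 <= i < size x -> nth 0 x i <= (asc (take i x)).+1).

(* reduction: the i-th smallest distinct letter becomes i-1, i.e. each letter
   is replaced by the number of distinct letters of w strictly smaller than it *)
Definition red (w : seq nat) : seq nat :=
  [seq size [seq b <- undup w | b < a] | a <- w].

Definition contains (x p : seq nat) : Prop :=
  exists s, subseq s x /\ red s = p.

Definition is_RGF (x : seq nat) : Prop :=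
  forall k, 1 <= k -> k \in x -> (k.-1) \in take (index k x) x.

(* Main.v *)
Require Import Defs.
From mathcomp Require Import all_boot zify.
Set Implicit Arguments. Unset Strict Implicit.

Ltac dec := repeat match goal with
 | |- context [ (?u == ?v) ] =>
    (have -> : (u == v) = true by apply/eqP; lia) ||
    (have -> : (u == v) = false by apply/negbTE/negP => /eqP; lia)
 | |- context [ (?u < ?v) ] =>
    (have -> : (u < v) = true by apply/idP; lia) ||
    (have -> : (u < v) = false by apply/negbTE/negP; lia)
 end.

Ltac solve_red := rewrite /red /= ?inE; dec; rewrite /=; dec; rewrite /= ?inE; dec; rewrite /=; dec; rewrite /=; dec; rewrite /= ?inE; dec; rewrite /=; dec.


Lemma r1 a b : b < a -> red [:: b; a; b; a] = [:: 0; 1; 0; 1].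
Proof. move=> *; solve_red; done. Qed.
Lemma r2 a b c : b < a -> a < c -> red [:: b; a; b; c] = [:: 0; 1; 0; 2].
Proof. move=> *; solve_red; done. Qed.
Lemma r3 a b c : c < a -> a < b -> red [:: c; a; b; c] = [:: 0; 1; 2; 0].
Proof. move=> *; solve_red; done. Qed.
Lemma r4 a b c : a < b -> b < c -> red [:: a; b; c; b] = [:: 0; 1; 2; 1].
Proof. move=> *; solve_red; done. Qed.
Lemma q1 a b : b < a -> red [:: a; b; a] = [:: 1; 0; 1].
Proof. move=> *; solve_red; done. Qed.
Lemma q2 a b c : b < a -> a < c -> red [:: a; b; c] = [:: 1; 0; 2].
Proof. move=> *; solve_red; done. Qed.
Lemma q3 a b c : c < a -> a < b -> red [:: a; b; c] = [:: 1; 2; 0].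
Proof. move=> *; solve_red; done. Qed.
Lemma q4 a b c : a < b -> b < c -> red [:: a; c; b] = [:: 0; 2; 1].
Proof. move=> *; solve_red; done. Qed.

Definition R (w : seq nat) u := count (fun y => y < u) (undup w).

Lemma redE s : red s = map (R s) s.
Proof. by apply: eq_map => u; rewrite size_filter. Qed.

Lemma count_le (l : seq nat) u v : u <= v ->
  count (fun y => y < u) l <= count (fun y => y < v) l.
Proof.
move=> h; elim: l => //= y l IH.
have : (y < u) <= (y < v).
  by case: (ltnP y u) => //= h1; rewrite (leq_trans h1 h).
lia.
Qed.

Lemma count_lt (l : seq nat) u v : u < v -> u \in l ->
  count (fun y => y < u) l < count (fun y => y < v) l.
Proof.
move=> h; elim: l => //= y l IH; rewrite inE => /orP [/eqP <-|/IH h2].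
  rewrite ltnn h /=; have := @count_le l _ _ (ltnW h); lia.
have : (y < u) <= (y < v).
  by case: (ltnP y u) => //= h1; rewrite (ltn_trans h1 h).
lia.
Qed.

Lemma red_lt s p i j : red s = p -> i < size s -> j < size s ->
  nth 0 p i < nth 0 p j -> nth 0 s i < nth 0 s j.
Proof.
move=> <- hi hj; rewrite redE !(nth_map 0) //.
case: (ltnP (nth 0 s i) (nth 0 s j)) => // h.
have := @count_le (undup s) _ _ h; rewrite /R; lia.
Qed.

Lemma red_eq s p i j : red s = p -> i < size s -> j < size s ->
  nth 0 p i = nth 0 p j -> nth 0 s i = nth 0 s j.
Proof.
move=> <- hi hj; rewrite redE !(nth_map 0) // /R.
case: (ltngtP (nth 0 s i) (nth 0 s j)) => // h.
  have := @count_lt (undup s) _ _ h; rewrite mem_undup mem_nth // => /(_ isT); lia.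
have := @count_lt (undup s) _ _ h; rewrite mem_undup mem_nth // => /(_ isT); lia.
Qed.

Lemma sub_greedy (a : nat) t x : subseq (a :: t) x ->
  subseq t (drop (index a x).+1 x).
Proof.
elim: x => //= y x IH.
have [e|ne] := eqVneq a y; first by rewrite drop0.
exact: IH.
Qed.

Lemma sub_ext (a v : nat) t x : subseq (a :: t) x ->
  v \in take (index a x) x -> subseq (v :: a :: t) x.
Proof.
move=> hs hv.
have ax : a \in x by apply: (mem_subseq hs); rewrite mem_head.
rewrite -(cat_take_drop (index a x) x).
rewrite (drop_nth 0) ?index_mem // nth_index //.
rewrite -[v :: _]/([:: v] ++ a :: t) cat_subseq //.
  by rewrite sub1seq.
by rewrite /= eqxx; apply: sub_greedy.
Qed.

Lemma rgf_before x : is_RGF x -> forall w v, v < w -> w \in x ->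
  v \in take (index w x) x.
Proof.
move=> hR; elim=> // w IH v hv hw.
have h1 := hR w.+1 isT hw; rewrite /= in h1.
case: (ltngtP v w) => [h|h|->] //; last by lia.
have wx : w \in x := mem_take h1.
have h2 := IH v h wx.
have h3 := index_ltn h1.
have vx : v \in x := mem_take h2.
move: h2; rewrite !in_take //; lia.
Qed.

Lemma size3 (s : seq nat) : size s = 3 -> exists a b c, s = [:: a; b; c].
Proof. by case: s => [|a [|b [|c [|]]]] //= _; exists a, b, c. Qed.
Lemma size4 (s : seq nat) : size s = 4 -> exists a b c d, s = [:: a; b; c; d].
Proof. by case: s => [|a [|b [|c [|d [|]]]]] //= _; exists a, b, c, d. Qed.

Lemma sz s p : red s = p -> size s = size p.
Proof. by move=> <-; rewrite /red size_map. Qed.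

Theorem lemma2p2 (x : seq nat) :
  is_ascent_seq x -> is_RGF x ->
  (contains x [:: 0; 1; 0; 1] <-> contains x [:: 1; 0; 1]) /\
  (contains x [:: 0; 1; 0; 2] <-> contains x [:: 1; 0; 2]) /\
  (contains x [:: 0; 1; 2; 0] <-> contains x [:: 1; 2; 0]) /\
  (contains x [:: 0; 1; 2; 1] <-> contains x [:: 0; 2; 1]).
Proof.
move=> _ hR.
split; [|split; [|split]]; split.
- move=> [s [hs hr]]; have [a [b [c [d E]]]] := size4 (sz hr); subst s.
  have := @red_lt _ _ 2 1 hr isT isT isT; rewrite /= => cb.
  have := @red_eq _ _ 1 3 hr isT isT erefl; rewrite /= => bd.
  exists [:: b; c; d]; split; first by apply: subseq_trans hs; apply: subseq_cons.
  by rewrite -bd q1.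
- move=> [s [hs hr]]; have [a [b [c E]]] := size3 (sz hr); subst s.
  have := @red_lt _ _ 1 0 hr isT isT isT; rewrite /= => ba.
  have := @red_eq _ _ 0 2 hr isT isT erefl; rewrite /= => ac.
  subst c; exists [:: b; a; b; a]; split; last exact: r1.
  exact: (sub_ext hs (rgf_before hR ba (mem_subseq hs (mem_head _ _)))).
- move=> [s [hs hr]]; have [a [b [c [d E]]]] := size4 (sz hr); subst s.
  have := @red_lt _ _ 2 1 hr isT isT isT; rewrite /= => cb.
  have := @red_lt _ _ 1 3 hr isT isT isT; rewrite /= => bd.
  exists [:: b; c; d]; split; first by apply: subseq_trans hs; apply: subseq_cons.
  exact: q2.
- move=> [s [hs hr]]; have [a [b [c E]]] := size3 (sz hr); subst s.
  have := @red_lt _ _ 1 0 hr isT isT isT; rewrite /= => ba.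
  have := @red_lt _ _ 0 2 hr isT isT isT; rewrite /= => ac.
  exists [:: b; a; b; c]; split; last exact: r2.
  exact: (sub_ext hs (rgf_before hR ba (mem_subseq hs (mem_head _ _)))).
- move=> [s [hs hr]]; have [a [b [c [d E]]]] := size4 (sz hr); subst s.
  have := @red_lt _ _ 3 1 hr isT isT isT; rewrite /= => db.
  have := @red_lt _ _ 1 2 hr isT isT isT; rewrite /= => bc.
  exists [:: b; c; d]; split; first by apply: subseq_trans hs; apply: subseq_cons.
  exact: q3.
- move=> [s [hs hr]]; have [a [b [c E]]] := size3 (sz hr); subst s.
  have := @red_lt _ _ 2 0 hr isT isT isT; rewrite /= => ca.
  have := @red_lt _ _ 0 1 hr isT isT isT; rewrite /= => ab.
  exists [:: c; a; b; c]; split; last exact: r3.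
  exact: (sub_ext hs (rgf_before hR ca (mem_subseq hs (mem_head _ _)))).
- move=> [s [hs hr]]; have [a [b [c [d E]]]] := size4 (sz hr); subst s.
  have := @red_lt _ _ 0 3 hr isT isT isT; rewrite /= => ad.
  have := @red_lt _ _ 3 2 hr isT isT isT; rewrite /= => dc.
  exists [:: a; c; d]; split; last exact: q4.
  apply: subseq_trans hs; exact: (cat_subseq (subseq_refl [:: a]) (subseq_cons [:: c; d] b)).
- move=> [s [hs hr]]; have [a [c [b E]]] := size3 (sz hr); subst s.
  have := @red_lt _ _ 0 2 hr isT isT isT; rewrite /= => ab.
  have := @red_lt _ _ 2 1 hr isT isT isT; rewrite /= => bc.
  exists [:: a; b; c; b]; split; last exact: r4.
  have hcb := cons_subseq hs.
  have s1 : subseq [:: b; c; b] x.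
    exact: (sub_ext hcb (rgf_before hR bc (mem_subseq hcb (mem_head _ _)))).
  exact: (sub_ext s1 (rgf_before hR ab (mem_subseq s1 (mem_head _ _)))).
Qed.
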